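(* Let $a_1,\ldots,a_k\in\mathbb R^d$ and $b_1,\ldots,b_k\in\mathbb R^d$ be two sets of orthonormal vectors such that $\langle a_i,b_i\rangle^2\ge 1-\epsilon$ for each $i\in[k]$. Then $\left\|\sum_{i=1}^k a_i^{\otimes 4}-b_i^{\otimes 4}\right\|_2\le 4\sqrt\epsilon$.
   Context: The 4-tensor $\sum_i a_i^{\otimes4}-b_i^{\otimes4}$ is viewed as the $d^2\times d^2$ matrix $\sum_i (a_i^{\otimes 2})(a_i^{\otimes2})^\top-(b_i^{\otimes2})(b_i^{\otimes2})^\top$, and $\|\cdot\|_2$ is its spectral norm. *)

(* Defs.v *)
From HB Require Import structures.
From mathcomp Require Import all_boot all_order all_algebra.
From mathcomp Require Import all_classical all_reals.
Set Implicit Arguments. Unset Strict Implicit. Unset Printing Implicit Defensive.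
Import Order.TTheory GRing.Theory Num.Theory.
Local Open Scope ring_scope.
Local Open Scope classical_set_scope.

Definition dotv {R : realType} {n : nat} (x y : 'cV[R]_n) : R := (x^T *m y) 0 0.

Definition vnorm {R : realType} {n : nat} (x : 'cV[R]_n) : R := Num.sqrt (dotv x x).

(* a^{\otimes 2} flattened to a vector of R^(d*d) (entries a_p a_q). *)
Definition tensor2 {R : realType} {d : nat} (a : 'cV[R]_d) : 'cV[R]_(d * d) :=
  (mxvec (a *m a^T))^T.

Definition spectral_norm {R : realType} {n : nat} (M : 'M[R]_n) : R :=
  sup [set vnorm (M *m x) | x in [set x : 'cV[R]_n | vnorm x = 1]].

(* The 4-tensor sum_i a_i^{⊗4} - b_i^{⊗4} viewed as a d^2 x d^2 matrix. *)
Definition quartic_diff {R : realType} {d k : nat} (a b : 'I_k -> 'cV[R]_d)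
  : 'M[R]_(d * d) :=
  \sum_(i < k) (tensor2 (a i) *m (tensor2 (a i))^T
                - tensor2 (b i) *m (tensor2 (b i))^T).

(* Main.v *)
Require Import Defs.
From mathcomp Require Import all_boot all_order all_algebra.
From mathcomp Require Import all_classical all_reals.
From mathcomp Require Import ring lra.
Import Order.TTheory GRing.Theory Num.Theory.
Local Open Scope ring_scope.

Section S.
Variable R : realType.

Lemma CS (I : finType) (f g : I -> R) :
  (\sum_i f i * g i) ^+ 2 <= (\sum_i f i ^+ 2) * (\sum_i g i ^+ 2).
Proof.
have H : 0 <= \sum_i \sum_j (f i * g j - f j * g i) ^+ 2.
  by apply: sumr_ge0 => i _; apply: sumr_ge0 => j _; apply: sqr_ge0.
have E : \sum_i \sum_j (f i * g j - f j * g i) ^+ 2 =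
   \sum_i (\sum_j (f i ^+ 2 * g j ^+ 2) + \sum_j (f j ^+ 2 * g i ^+ 2)
   - 2 * (\sum_j (f i * g i) * (f j * g j))).
  apply: eq_bigr => i _; rewrite mulr_sumr -big_split -sumrB /=.
  by apply: eq_bigr => j _; ring.
rewrite sumrB big_split /= -mulr_sumr in E.
have E1 : \sum_i \sum_j (f i ^+ 2 * g j ^+ 2) = (\sum_i f i ^+ 2) * (\sum_i g i ^+ 2).
  by rewrite mulr_suml; apply: eq_bigr => i _; rewrite mulr_sumr.
have E2 : \sum_i \sum_j (f j ^+ 2 * g i ^+ 2) = (\sum_i f i ^+ 2) * (\sum_i g i ^+ 2).
  by rewrite mulrC mulr_suml; apply: eq_bigr => i _; rewrite mulr_sumr; apply: eq_bigr => j _; rewrite mulrC.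
have E3 : \sum_i \sum_j (f i * g i) * (f j * g j) = (\sum_i f i * g i) ^+ 2.
  by rewrite expr2 mulr_suml; apply: eq_bigr => i _; rewrite mulr_sumr.
rewrite E E1 E2 E3 in H; lra.
Qed.

Lemma sqB (u w : R) : (u - w) ^+ 2 = u ^+ 2 - 2 * (u * w) + w ^+ 2.
Proof. ring. Qed.

Lemma bessel (k d : nat) (e : 'I_k -> 'I_d -> R) (y : 'I_d -> R)
  (he : forall i j, \sum_p e i p * e j p = (i == j)%:R) :
  \sum_i (\sum_p e i p * y p) ^+ 2 <= \sum_p y p ^+ 2.
Proof.
set c := fun i => \sum_p e i p * y p.
have H : 0 <= \sum_p (y p - \sum_i c i * e i p) ^+ 2.
  by apply: sumr_ge0 => p _; apply: sqr_ge0.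
have E : \sum_p (y p - \sum_i c i * e i p) ^+ 2 =
  \sum_p y p ^+ 2 - 2 * (\sum_p y p * \sum_i c i * e i p)
  + \sum_p (\sum_i c i * e i p) ^+ 2.
  rewrite mulr_sumr -sumrB -big_split /=; apply: eq_bigr => p _; exact: sqB.
have E1 : \sum_p y p * \sum_i c i * e i p = \sum_i c i ^+ 2.
  under eq_bigr => p _ do rewrite mulr_sumr.
  rewrite exchange_big /=; apply: eq_bigr => i _.
  rewrite expr2 {1}/c mulr_suml; apply: eq_bigr => p _; rewrite /c; ring.
have E2 : \sum_p (\sum_i c i * e i p) ^+ 2 = \sum_i c i ^+ 2.
  under eq_bigr => p _ do rewrite expr2 mulr_suml.
  rewrite exchange_big /=; apply: eq_bigr => i _.
  under eq_bigr => p _ do rewrite mulr_sumr.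
  rewrite exchange_big /=.
  rewrite (bigD1 i) //= [X in _ + X]big1 ?addr0.
    have -> : \sum_p c i * e i p * (c i * e i p) = c i * c i * \sum_p e i p * e i p.
      rewrite mulr_sumr; apply: eq_bigr => p _; rewrite /c; ring.
    by rewrite he eqxx mulr1 expr2.
  move=> j /negbTE hj.
  have -> : \sum_p c i * e i p * (c j * e j p) = c i * c j * \sum_p e i p * e j p.
    rewrite mulr_sumr; apply: eq_bigr => p _; rewrite /c; ring.
  by rewrite he eq_sym hj mulr0.
rewrite E E1 E2 in H; lra.
Qed.
Lemma besselL (k d : nat) (e f : 'I_k -> 'I_d -> R) (Z : 'I_d -> 'I_d -> R) (m : R)
  (he : forall i j, \sum_p e i p * e j p = (i == j)%:R)
  (hf : forall i, \sum_q f i q ^+ 2 <= m) (hm : 0 <= m) :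
  \sum_i (\sum_p \sum_q e i p * f i q * Z p q) ^+ 2 <= m * \sum_p \sum_q Z p q ^+ 2.
Proof.
have step : forall i, (\sum_p \sum_q e i p * f i q * Z p q) ^+ 2 <=
    m * \sum_q (\sum_p e i p * Z p q) ^+ 2.
  move=> i.
  have -> : \sum_p \sum_q e i p * f i q * Z p q = \sum_q f i q * (\sum_p e i p * Z p q).
    rewrite exchange_big; apply: eq_bigr => q _; rewrite mulr_sumr.
    by apply: eq_bigr => p _; ring.
  apply: le_trans (CS _ (fun q => f i q) (fun q => \sum_p e i p * Z p q)) _.
  apply: ler_wpM2r (hf i).
  by apply: sumr_ge0 => q _; apply: sqr_ge0.
apply: le_trans (ler_sum _ (fun i _ => step i)) _.
rewrite -mulr_sumr; apply: (ler_wpM2l hm).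
rewrite exchange_big [in X in _ <= X]exchange_big /=.
apply: ler_sum => q _; exact: (bessel _ _ _ (fun p => Z p q) he).
Qed.

Lemma besselR (k d : nat) (e f : 'I_k -> 'I_d -> R) (Z : 'I_d -> 'I_d -> R) (m : R)
  (he : forall i j, \sum_p e i p * e j p = (i == j)%:R)
  (hf : forall i, \sum_q f i q ^+ 2 <= m) (hm : 0 <= m) :
  \sum_i (\sum_p \sum_q f i p * e i q * Z p q) ^+ 2 <= m * \sum_p \sum_q Z p q ^+ 2.
Proof.
have -> : \sum_i (\sum_p \sum_q f i p * e i q * Z p q) ^+ 2 =
    \sum_i (\sum_p \sum_q e i p * f i q * Z q p) ^+ 2.
  apply: eq_bigr => i _; rewrite exchange_big; congr (_ ^+ 2).
  by apply: eq_bigr => p _; apply: eq_bigr => q _; ring.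
apply: le_trans (besselL _ _ _ _ (fun q p => Z p q) _ he hf hm) _.
by rewrite [in X in X <= _]exchange_big.
Qed.
Lemma sum2B (d : nat) (F G : 'I_d -> 'I_d -> R) :
  \sum_p \sum_q F p q - \sum_p \sum_q G p q = \sum_p \sum_q (F p q - G p q).
Proof. by rewrite -sumrB; apply: eq_bigr => p _; rewrite -sumrB. Qed.

Lemma sum2D (d : nat) (F G : 'I_d -> 'I_d -> R) :
  \sum_p \sum_q F p q + \sum_p \sum_q G p q = \sum_p \sum_q (F p q + G p q).
Proof. by rewrite -big_split; apply: eq_bigr => p _; rewrite -big_split. Qed.

Lemma final_arith (T D Su Sv S eps : R) :
  0 <= S -> 0 <= D -> Su <= S -> Sv <= S -> 0 <= eps ->
  T ^+ 2 <= D * (2 * Su + 2 * Sv - D) ->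
  (1/4 <= eps \/ exists c, [/\ eps < 1/4, 0 <= c, c ^+ 2 = 1 - eps & D <= 4 * (2 - 2 * c) * S]) ->
  `|T| <= 4 * Num.sqrt eps * S.
Proof.
move=> hS hD hSu hSv he hT hc.
have hq : 0 <= Num.sqrt eps := sqrtr_ge0 _.
have hq2 : Num.sqrt eps ^+ 2 = eps := sqr_sqrtr he.
have H1 : T ^+ 2 <= D * (4 * S - D).
  apply: le_trans hT _; apply: (ler_wpM2l hD); lra.
suff H : T ^+ 2 <= 16 * eps * S ^+ 2.
  have H' : T ^+ 2 <= (4 * Num.sqrt eps * S) ^+ 2.
    rewrite !exprMn hq2; apply: le_trans H _; rewrite (_ : 4 ^+ 2 = 16 :> R); [lra | by rewrite expr2; lra].
  have hX : 0 <= 4 * Num.sqrt eps * S by apply: mulr_ge0 => //; apply: mulr_ge0.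
  rewrite ler_norml; apply/andP; split; nra.
case: hc => [h4|[c [he4 hc0 hc2 hDc]]].
  have h5 : D * (4 * S - D) <= 4 * S ^+ 2.
    have h6 := sqr_ge0 (D - 2 * S).
    have -> : 4 * S ^+ 2 = D * (4 * S - D) + (D - 2 * S) ^+ 2 by ring.
    lra.
  have h7 : 4 * S ^+ 2 <= 16 * eps * S ^+ 2.
    have h8 := sqr_ge0 S.
    have -> : 16 * eps * S ^+ 2 = 4 * S ^+ 2 + (16 * eps - 4) * S ^+ 2 by ring.
    have : 0 <= (16 * eps - 4) * S ^+ 2 by apply: mulr_ge0 => //; lra.
    lra.
  lra.
have hc34 : 3/4 <= c.
  rewrite leNgt; apply/negP => h.
  have : c ^+ 2 <= (3/4) * c by rewrite expr2; apply: ler_wpM2r => //; lra.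
  lra.
have H2 : D * (4 * S - D) <= 4 * (2 - 2 * c) * S * (4 * S - 4 * (2 - 2 * c) * S).
  have : 0 <= (4 * (2 - 2 * c) * S - D) * (4 * S - D - 4 * (2 - 2 * c) * S).
    apply: mulr_ge0; first lra.
    nra.
  nra.
have H3 : 4 * (2 - 2 * c) * S * (4 * S - 4 * (2 - 2 * c) * S) <= 16 * eps * S ^+ 2.
  have -> : eps = 1 - c ^+ 2 by rewrite hc2; ring.
  have : 0 <= 48 * (1 - c) ^+ 2 * S ^+ 2 by apply: mulr_ge0; [apply: mulr_ge0 => //; apply: sqr_ge0| apply: sqr_ge0].
  move=> h; apply: (le_trans _ (le_refl _)). nra.
lra.
Qed.
Lemma core (k d : nat) (A B : 'I_k -> 'I_d -> R) (Z : 'I_d -> 'I_d -> R) (eps : R)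
  (hA : forall i j, \sum_p A i p * A j p = (i == j)%:R)
  (hB : forall i j, \sum_p B i p * B j p = (i == j)%:R)
  (hAB : forall i, 1 - eps <= (\sum_p A i p * B i p) ^+ 2) :
  `| \sum_i ((\sum_p \sum_q A i p * A i q * Z p q) ^+ 2
             - (\sum_p \sum_q B i p * B i q * Z p q) ^+ 2) |
  <= 4 * Num.sqrt eps * \sum_p \sum_q Z p q ^+ 2.
Proof.
have hS : 0 <= \sum_p \sum_q Z p q ^+ 2.
  by apply: sumr_ge0 => p _; apply: sumr_ge0 => q _; apply: sqr_ge0.
case: (posnP k) => [k0|kpos].
  subst k; rewrite big_ord0 normr0; apply: mulr_ge0 => //.
  by apply: mulr_ge0 => //; apply: sqrtr_ge0.
pose c i := \sum_p A i p * B i p.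
have hA1 : forall i, \sum_p A i p ^+ 2 = 1.
  move=> i; transitivity ((i == i)%:R : R); last by rewrite eqxx.
  by rewrite -hA; apply: eq_bigr => p _; rewrite expr2.
have hB1 : forall i, \sum_p B i p ^+ 2 = 1.
  move=> i; transitivity ((i == i)%:R : R); last by rewrite eqxx.
  by rewrite -hB; apply: eq_bigr => p _; rewrite expr2.
have hc1 : forall i, c i ^+ 2 <= 1.
  move=> i; have := CS _ (A i) (B i); by rewrite hA1 hB1 mulr1.
have he : 0 <= eps.
  have := hAB (Ordinal kpos); have := hc1 (Ordinal kpos); rewrite /c; lra.
pose s i : R := if 0 <= c i then 1 else -1.
have hs : forall i, s i * s i = 1.
  by move=> i; rewrite /s; case: ifP => _; rewrite ?mulr1 ?mulrNN ?mulr1.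
have hsc : forall i, s i * c i = `|c i|.
  move=> i; rewrite /s; case: ifP => h; first by rewrite mul1r ger0_norm.
  by rewrite mulN1r ltr0_norm // ltNge h.
pose B' i p := s i * B i p.
have hB' : forall i j, \sum_p B' i p * B' j p = (i == j)%:R.
  move=> i j.
  have -> : \sum_p B' i p * B' j p = s i * s j * \sum_p B i p * B j p.
    by rewrite mulr_sumr; apply: eq_bigr => p _; rewrite /B'; ring.
  rewrite hB; case: eqP => [->|_]; first by rewrite hs mulr1.
  by rewrite mulr0.
have hdist : forall i, \sum_p (A i p - B' i p) ^+ 2 = 2 - 2 * `|c i|.
  move=> i; rewrite -hsc.
  have -> : \sum_p (A i p - B' i p) ^+ 2 =
     \sum_p A i p ^+ 2 + s i * s i * \sum_p B i p ^+ 2 - 2 * (s i * c i).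
    rewrite /c mulr_sumr mulr_sumr mulr_sumr -big_split -sumrB /=.
    by apply: eq_bigr => p _; rewrite /B'; ring.
  by rewrite hA1 hB1 hs; ring.
pose u i := \sum_p \sum_q A i p * A i q * Z p q.
pose v i := \sum_p \sum_q B' i p * B' i q * Z p q.
have hv : forall i, \sum_p \sum_q B i p * B i q * Z p q = v i.
  move=> i; rewrite /v; apply: eq_bigr => p _; apply: eq_bigr => q _.
  rewrite /B' -[B i p * B i q * Z p q]mul1r -(hs i); ring.
under eq_bigr => i _ do rewrite hv -/(u i).
pose P i := \sum_p \sum_q A i p * (A i q - B' i q) * Z p q.
pose Q i := \sum_p \sum_q (A i p - B' i p) * B' i q * Z p q.
have huv : forall i, u i - v i = P i + Q i.
  move=> i; rewrite /u /v /P /Q sum2B sum2D.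
  by apply: eq_bigr => p _; apply: eq_bigr => q _; ring.
set S := \sum_p \sum_q Z p q ^+ 2.
have hSu : \sum_i u i ^+ 2 <= S.
  by rewrite -[S]mul1r; apply: besselL hA _ ler01 => j; rewrite hA1.
have hB'1 : forall j, \sum_p B' j p ^+ 2 = 1.
  move=> j; transitivity ((j == j)%:R : R); last by rewrite eqxx.
  by rewrite -hB'; apply: eq_bigr => p _; rewrite expr2.
have hSv : \sum_i v i ^+ 2 <= S.
  by rewrite -[S]mul1r; apply: besselL hB' _ ler01 => j; rewrite hB'1.
pose D := \sum_i (u i - v i) ^+ 2.
have hD0 : 0 <= D by apply: sumr_ge0 => i _; apply: sqr_ge0.
have hT : (\sum_i (u i ^+ 2 - v i ^+ 2)) ^+ 2 <=
     D * (2 * \sum_i u i ^+ 2 + 2 * \sum_i v i ^+ 2 - D).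
  have -> : \sum_i (u i ^+ 2 - v i ^+ 2) = \sum_i (u i - v i) * (u i + v i).
    by apply: eq_bigr => i _; ring.
  apply: le_trans (CS _ (fun i => u i - v i) (fun i => u i + v i)) _.
  rewrite -/D; apply: (ler_wpM2l hD0); rewrite le_eqVlt; apply/orP; left; apply/eqP.
  rewrite /D !mulr_sumr -!big_split -sumrB /=; apply: eq_bigr => i _; ring.
apply: (final_arith _ _ _ _ _ _ hS hD0 hSu hSv he hT).
case: (lerP (1/4) eps) => h4; [by left | right].
pose cc := Num.sqrt (1 - eps).
have hcc0 : 0 <= cc := sqrtr_ge0 _.
have hcc2 : cc ^+ 2 = 1 - eps by rewrite sqr_sqrtr //; lra.
exists cc; split => //.
have hm : forall i, \sum_q (A i q - B' i q) ^+ 2 <= 2 - 2 * cc.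
  move=> i; rewrite hdist.
  suff : cc <= `|c i| by lra.
  rewrite -ler_sqr ?nnegrE ?normr_ge0 // /= real_normK ?num_real // hcc2; exact: hAB.
have hm0 : 0 <= 2 - 2 * cc.
  suff : cc <= 1 by lra.
  rewrite -ler_sqr ?nnegrE ?ler01 // /= expr1n hcc2; lra.
have hP : \sum_i P i ^+ 2 <= (2 - 2 * cc) * S.
  exact: besselL hA hm hm0.
have hQ : \sum_i Q i ^+ 2 <= (2 - 2 * cc) * S.
  exact: besselR hB' hm hm0.
have hDPQ : D <= 2 * \sum_i P i ^+ 2 + 2 * \sum_i Q i ^+ 2.
  rewrite /D !mulr_sumr -big_split /=; apply: ler_sum => i _; rewrite huv.
  have := sqr_ge0 (P i - Q i); have -> : (P i - Q i) ^+ 2 = 2 * P i ^+ 2 + 2 * Q i ^+ 2 - (P i + Q i) ^+ 2 by ring.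
  lra.
rewrite -/S; lra.
Qed.
Lemma dotvE (n : nat) (x y : 'cV[R]_n) : dotv x y = \sum_i x i 0 * y i 0.
Proof. by rewrite /dotv !mxE; apply: eq_bigr => i _; rewrite mxE. Qed.

Lemma dotvDr (n : nat) (a x y : 'cV[R]_n) : dotv a (x + y) = dotv a x + dotv a y.
Proof. by rewrite !dotvE -big_split; apply: eq_bigr => i _; rewrite mxE mulrDr. Qed.

Lemma dotvBr (n : nat) (a x y : 'cV[R]_n) : dotv a (x - y) = dotv a x - dotv a y.
Proof. by rewrite !dotvE -sumrB; apply: eq_bigr => i _; rewrite !mxE mulrBr. Qed.

Lemma dotvZr (n : nat) (a x : 'cV[R]_n) t : dotv a (t *: x) = t * dotv a x.
Proof. by rewrite !dotvE mulr_sumr; apply: eq_bigr => i _; rewrite mxE; ring. Qed.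

Lemma dotv_ge0 (n : nat) (x : 'cV[R]_n) : 0 <= dotv x x.
Proof. by rewrite dotvE; apply: sumr_ge0 => i _; rewrite -expr2 sqr_ge0. Qed.

Lemma sum_mxvec (d : nat) (F : 'I_(d * d) -> R) :
  \sum_k F k = \sum_p \sum_q F (mxvec_index p q).
Proof.
rewrite pair_bigA /=.
rewrite (reindex (uncurry (@mxvec_index d d))) /=; last exact: curry_mxvec_bij.
by apply: eq_bigr => -[p q] _.
Qed.

Lemma tensor2E (d : nat) (a : 'cV[R]_d) p q :
  tensor2 a (mxvec_index p q) 0 = a p 0 * a q 0.
Proof. by rewrite /tensor2 mxE mxvecE mxE big_ord1 mxE. Qed.

Lemma dot_tensor2 (d : nat) (a : 'cV[R]_d) (z : 'cV[R]_(d * d)) :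
  dotv (tensor2 a) z = \sum_p \sum_q a p 0 * a q 0 * z (mxvec_index p q) 0.
Proof.
rewrite dotvE sum_mxvec; apply: eq_bigr => p _; apply: eq_bigr => q _.
by rewrite tensor2E.
Qed.

Lemma dot_self (d : nat) (z : 'cV[R]_(d * d)) :
  dotv z z = \sum_p \sum_q z (mxvec_index p q) 0 ^+ 2.
Proof.
rewrite dotvE sum_mxvec; apply: eq_bigr => p _; apply: eq_bigr => q _.
by rewrite expr2.
Qed.

Lemma bilin (n k : nat) (al be : 'I_k -> 'cV[R]_n) (w x : 'cV[R]_n) :
  dotv w ((\sum_i (al i *m (al i)^T - be i *m (be i)^T)) *m x) =
  \sum_i (dotv (al i) w * dotv (al i) x - dotv (be i) w * dotv (be i) x).
Proof.
have HM : forall r s, (\sum_i (al i *m (al i)^T - be i *m (be i)^T)) r s =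
    \sum_i (al i r 0 * al i s 0 - be i r 0 * be i s 0).
  by move=> r s; rewrite summxE; apply: eq_bigr => i _; rewrite !mxE !big_ord1 !mxE.
rewrite dotvE.
transitivity (\sum_r \sum_s \sum_i
   (w r 0 * (al i r 0 * al i s 0 - be i r 0 * be i s 0) * x s 0)).
  apply: eq_bigr => r _; rewrite mxE mulr_sumr; apply: eq_bigr => s _.
  by rewrite HM mulr_suml mulr_sumr; apply: eq_bigr => i _; ring.
under eq_bigr => r _ do rewrite exchange_big.
rewrite exchange_big /=; apply: eq_bigr => i _.
rewrite !dotvE !mulr_suml -sumrB; apply: eq_bigr => r _.
rewrite !mulr_sumr -sumrB; apply: eq_bigr => s _; ring.
Qed.
End S.

Theorem mainTheorem10 (R : realType) (d k : nat) (eps : R)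
  (a b : 'I_k -> 'cV[R]_d)
  (ha : forall i j : 'I_k, dotv (a i) (a j) = (i == j)%:R)
  (hb : forall i j : 'I_k, dotv (b i) (b j) = (i == j)%:R)
  (hab : forall i : 'I_k, 1 - eps <= dotv (a i) (b i) ^+ 2) :
  spectral_norm (quartic_diff a b) <= 4 * Num.sqrt eps.
Proof.
have hK : 0 <= 4 * Num.sqrt eps by apply: mulr_ge0 => //; apply: sqrtr_ge0.
pose al i := tensor2 (a i).
pose be i := tensor2 (b i).
pose Qf (z : 'cV[R]_(d * d)) := \sum_i ((dotv (al i) z) ^+ 2 - (dotv (be i) z) ^+ 2).
have hQ : forall z, `|Qf z| <= 4 * Num.sqrt eps * dotv z z.
  move=> z; rewrite /Qf dot_self.
  under eq_bigr => i _ do rewrite /al /be !dot_tensor2.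
  apply: (core R k d (fun i p => a i p 0) (fun i p => b i p 0)
            (fun p q => z (mxvec_index p q) 0) eps).
  - by move=> i j; rewrite -ha dotvE.
  - by move=> i j; rewrite -hb dotvE.
  - by move=> i; rewrite -dotvE; exact: hab.
rewrite /spectral_norm.
set E := (X in sup X).
case: (pselect (E !=set0)%classic) => [ne | /nonemptyPn ->]; last by rewrite sup0.
apply: (ge_sup ne) => _ [x /= hx <-].
set w := quartic_diff a b *m x.
have hxx : dotv x x = 1.
  by move: hx; rewrite /vnorm => h; rewrite -(sqr_sqrtr (@dotv_ge0 R _ x)) h expr1n.
rewrite /vnorm.
set n := Num.sqrt (dotv w w).
have hn0 : 0 <= n := sqrtr_ge0 _.
have hn2 : n ^+ 2 = dotv w w := sqr_sqrtr (@dotv_ge0 R _ w).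
have hBw : dotv w w = \sum_i (dotv (al i) w * dotv (al i) x - dotv (be i) w * dotv (be i) x).
  by rewrite {2}/w /quartic_diff bilin.
set y := n *: x.
have pol : 4 * (n * dotv w w) = Qf (w + y) - Qf (w - y).
  rewrite hBw /Qf !mulr_sumr -sumrB; apply: eq_bigr => i _.
  by rewrite !dotvBr !dotvDr !dotvZr; ring.
have hyy : dotv (w + y) (w + y) + dotv (w - y) (w - y) = 2 * dotv w w + 2 * dotv y y.
  by rewrite !dotvE !mulr_sumr -!big_split /=; apply: eq_bigr => r _; rewrite !mxE; ring.
have hy : dotv y y = n ^+ 2.
  rewrite -[RHS]mulr1 -hxx !dotvE mulr_sumr; apply: eq_bigr => r _; rewrite !mxE; ring.
have h1 := hQ (w + y).
have h2 := hQ (w - y).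
have h3 := ler_norm (Qf (w + y)).
have h4 : - Qf (w - y) <= `|Qf (w - y)| by rewrite -normrN ler_norm.
have key : n * n ^+ 2 <= 4 * Num.sqrt eps * n ^+ 2.
  have : 4 * (n * n ^+ 2) <= 4 * Num.sqrt eps * (4 * n ^+ 2).
    rewrite hn2 pol -hn2 (_ : 4 * n ^+ 2 = 2 * dotv w w + 2 * dotv y y); last by rewrite hy -hn2; ring.
    rewrite -hyy.
    set K := 4 * Num.sqrt eps in h1 h2 *.
    have hh : K * dotv (w + y) (w + y) + K * dotv (w - y) (w - y) = K * (dotv (w + y) (w + y) + dotv (w - y) (w - y)) by ring.
    lra.
  set K := 4 * Num.sqrt eps in hK *; move=> h; lra.
set K := 4 * Num.sqrt eps in key hK *.
rewrite leNgt; apply/negP => hlt.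
have : 0 < (n - K) * n ^+ 2 by apply: mulr_gt0; [lra | apply: exprn_gt0; lra].
nra.
Qed.
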